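(* $\mathrm{Aut}_0(H)$ is a normal subgroup of $\mathrm{Aut}_c(H)$, and $\mathrm{Aut}_c(H)$ is the internal semidirect product of $\mathrm{Aut}_0(H)$ and $\Theta=\{\theta_r:r\in\mathbb{Z}\}$, where $\theta_r:H\to H$ is the linear map $\theta_r(x^ny^m)=x^{n+r}y^m$.
   Context: Let $k$ be a field and $0\neq q\in k$ not a root of unity. $H=k_q[x,x^{-1},y]$ is the $k$-algebra generated by $x,x^{-1},y$ with $xx^{-1}=x^{-1}x=1$, $yx=qxy$, a Hopf algebra with $\Delta(x)=x\otimes x$, $\Delta(x^{-1})=x^{-1}\otimes x^{-1}$, $\Delta(y)=y\otimes x+1\otimes y$, $\varepsilon(x)=1$, $\varepsilon(y)=0$; $\{x^ny^m:n\in\mathbb{Z},m\in\mathbb{N}\}$ is a $k$-basis. $\mathrm{Aut}_c(H)$ is the group under composition of coalgebra automorphisms of $H$ and $\mathrm{Aut}_0(H)=\{\phi\in\mathrm{Aut}_c(H):\phi(1)=1\}$. (Each $\theta_r$ is a coalgebra automorphism of $H$.) *)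

(* Defs.v *)
From HB Require Import structures.
From mathcomp Require Import all_boot all_order all_algebra.
From mathcomp Require Import boolp classical_sets cardinality fsbigop.

Set Implicit Arguments.
Unset Strict Implicit.
Unset Printing Implicit Defensive.
Import Order.TTheory GRing.Theory Num.Theory.
Local Open Scope classical_set_scope.
Local Open Scope ring_scope.

(* H = k_q[x, x^-1, y] is modelled through its k-basis {x^n y^m : n in Z, m in N},
   indexed by pairs (n, m) : int * nat.  A vector of H is a finitely supported
   coefficient function B -> k; H (x) H has basis B * B. *)
Definition B := (int * nat)%type.

Definition finsupp (k : fieldType) (T : Type) (v : T -> k) : Prop :=
  finite_set [set t | v t != 0].

Definition ebasis (k : fieldType) (b : B) : B -> k := fun c => (b == c)%:R.

(* A k-linear endomorphism of H is given by the images M b of the basis vectors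
   (each finitely supported): phi(x^n y^m) = sum_c M (n,m) c * x^c.1 y^c.2. *)
Definition is_endo (k : fieldType) (M : B -> B -> k) : Prop :=
  forall b, finsupp (M b).

Definition app (k : fieldType) (M : B -> B -> k) (v : B -> k) : B -> k :=
  fun c => \sum_(b \in [set: B]) v b * M b c.

Definition lcomp (k : fieldType) (M N : B -> B -> k) : B -> B -> k :=
  fun b => app M (N b).

Definition idm (k : fieldType) : B -> B -> k := fun b => ebasis k b.

(* Comultiplication on basis vectors, from the Hopf structure:
   Delta(x^n) = x^n (x) x^n  and  Delta(x^n y^(m+1)) = Delta(x^n y^m) * (y (x) x + 1 (x) y)
   in the algebra H (x) H, using  y x = q x y:
     (x^a y^b (x) x^c y^d) (y (x) x) = x^a y^(b+1) (x) q^d x^(c+1) y^d,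
     (x^a y^b (x) x^c y^d) (1 (x) y) = x^a y^b (x) x^c y^(d+1).
   Delta_e q (n, m) (c1, c2) is the coefficient of e_c1 (x) e_c2 in Delta(x^n y^m). *)
Fixpoint Delta_aux (k : fieldType) (q : k) (n : int) (m : nat) (c1 c2 : B) : k :=
  match m with
  | 0%N => ((c1 == (n, 0%N)) && (c2 == (n, 0%N)))%:R
  | m'.+1 =>
      (if (0 < c1.2)%N
       then q ^+ c2.2 * Delta_aux q n m' (c1.1, c1.2.-1) (c2.1 - 1, c2.2)
       else 0)
    + (if (0 < c2.2)%N then Delta_aux q n m' c1 (c2.1, c2.2.-1) else 0)
  end.

Definition Delta_e (k : fieldType) (q : k) (b : B) (c1 c2 : B) : k :=
  Delta_aux q b.1 b.2 c1 c2.

Definition eps_e (k : fieldType) (b : B) : k := (b.2 == 0%N)%:R.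

Definition Delta (k : fieldType) (q : k) (v : B -> k) (c1 c2 : B) : k :=
  \sum_(a \in [set: B]) v a * Delta_e q a c1 c2.

Definition eps (k : fieldType) (v : B -> k) : k :=
  \sum_(a \in [set: B]) v a * eps_e k a.

Definition tensor_app_Delta (k : fieldType) (q : k) (M : B -> B -> k) (b : B)
    (c1 c2 : B) : k :=
  \sum_(a \in [set: B * B]) Delta_e q b a.1 a.2 * M a.1 c1 * M a.2 c2.

(* M is a coalgebra map: Delta o phi = (phi (x) phi) o Delta and eps o phi = eps
   (checked on the basis, which suffices by linearity). *)
Definition is_coalg_map (k : fieldType) (q : k) (M : B -> B -> k) : Prop :=
  is_endo M /\
  (forall b c1 c2, Delta q (M b) c1 c2 = tensor_app_Delta q M b c1 c2) /\
  (forall b, eps (M b) = eps_e k b).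

(* Aut_c(H): bijective coalgebra maps (bijectivity = existence of a two-sided
   linear inverse). *)
Definition Autc (k : fieldType) (q : k) (M : B -> B -> k) : Prop :=
  is_coalg_map q M /\
  exists N : B -> B -> k, is_endo N /\ lcomp M N = idm k /\ lcomp N M = idm k.

Definition Aut0 (k : fieldType) (q : k) (M : B -> B -> k) : Prop :=
  Autc q M /\ M (0%Z, 0%N) = ebasis k (0%Z, 0%N).

Definition theta (k : fieldType) (r : int) : B -> B -> k :=
  fun b => ebasis k (b.1 + r, b.2).

(* Main.v *)
Require Import Defs.
From HB Require Import structures.
From mathcomp Require Import all_boot all_order all_algebra.
From mathcomp Require Import boolp classical_sets cardinality fsbigop finmap ring zify.
Import GRing.Theory.
Local Open Scope ring_scope.
Set Implicit Arguments.
Unset Strict Implicit.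


Section Infra.
Variable k : fieldType.

Lemma sT (T : choiceType) (s : seq T) (F : T -> k) : uniq s ->
  (forall i, F i != 0 -> i \in s) ->
  \sum_(i \in [set: T]) F i = \sum_(i <- s) F i.
Proof.
move=> us hs; rewrite (fsbigTE [fset x | x in s]%fset).
  by apply: perm_big; rewrite uniq_perm // => i; rewrite !inE.
move=> i; rewrite !inE /= => hi; apply/eqP; apply: contraR hi => /hs.
by [].
Qed.

Lemma sTu (T : choiceType) (s : seq T) (F : T -> k) :
  (forall i, F i != 0 -> i \in s) ->
  \sum_(i \in [set: T]) F i = \sum_(i <- undup s) F i.
Proof. by move=> hs; apply: sT; rewrite ?undup_uniq // => i /hs; rewrite mem_undup. Qed.

Lemma sum_pt (T : choiceType) (a0 : T) (F : T -> k) :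
  (forall a, a != a0 -> F a = 0) -> \sum_(a \in [set: T]) F a = F a0.
Proof.
move=> h; rewrite (@sT _ [:: a0]) // ?big_seq1 // => i; apply: contraR.
by rewrite inE => /h ->.
Qed.

Lemma sum_pt2 (T : choiceType) (a0 a1 : T) (F : T -> k) : a0 != a1 ->
  (forall a, a != a0 -> a != a1 -> F a = 0) ->
  \sum_(a \in [set: T]) F a = F a0 + F a1.
Proof.
move=> ne h; rewrite (@sT _ [:: a0; a1]) /= ?inE ?ne // ?big_cons ?big_nil ?addr0 // => i.
by apply: contraR; rewrite !inE negb_or => /andP[/h H /H ->].
Qed.

Lemma sum0_ex (T : choiceType) (F : T -> k) :
  \sum_(a \in [set: T]) F a != 0 -> exists a, F a != 0.
Proof.
apply: contraNP => /forallNP h; apply/eqP; apply: fsbig1 => i _.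
by move: (h i); move/negP; rewrite negbK => /eqP.
Qed.

Lemma lsum0_ex (T : Type) (s : seq T) (F : T -> k) :
  \sum_(a <- s) F a != 0 -> exists a, F a != 0.
Proof.
apply: contraNP => /forallNP h; apply/eqP; apply: big1 => i _.
by move: (h i); move/negP; rewrite negbK => /eqP.
Qed.

Lemma xchg (T U : choiceType) (F : T -> U -> k) (A : seq T) (P : seq U) :
  (forall a p, F a p != 0 -> a \in A /\ p \in P) ->
  \sum_(p \in [set: U]) \sum_(a \in [set: T]) F a p =
  \sum_(a \in [set: T]) \sum_(p \in [set: U]) F a p.
Proof.
move=> h.
have i1 p : \sum_(a \in [set: T]) F a p = \sum_(a <- undup A) F a p.
  by apply: sTu => a /h[].
have i2 a : \sum_(p \in [set: U]) F a p = \sum_(p <- undup P) F a p.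
  by apply: sTu => p /h[].
under eq_fsbigr => p _ do rewrite i1.
under [RHS]eq_fsbigr => a _ do rewrite i2.
rewrite (@sTu _ P); last by move=> p /lsum0_ex[a /h[]].
rewrite (@sTu _ A); last by move=> a /lsum0_ex[p /h[]].
exact: exchange_big.
Qed.

Lemma pairsum (T U : choiceType) (F : T * U -> k) (A : seq T) (P : seq U) :
  (forall a p, F (a, p) != 0 -> a \in A /\ p \in P) ->
  \sum_(x \in [set: T * U]) F x =
  \sum_(a \in [set: T]) \sum_(p \in [set: U]) F (a, p).
Proof.
move=> h.
have i2 a : \sum_(p \in [set: U]) F (a, p) = \sum_(p <- undup P) F (a, p).
  by apply: sTu => p /h[].
under [RHS]eq_fsbigr => a _ do rewrite i2.
rewrite [RHS](@sTu _ A); last by move=> a /lsum0_ex[p /h[]].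
rewrite (@sT _ (allpairs pair (undup A) (undup P))).
- by rewrite big_allpairs.
- by apply: allpairs_uniq => //; rewrite ?undup_uniq // => -[? ?] [? ?].
- by move=> [a p] /h[ha hp]; apply/allpairsP; exists (a, p); rewrite !mem_undup.
Qed.

Definition fin1 (T : choiceType) (v : T -> k) := exists s : seq T, forall i, v i != 0 -> i \in s.

Lemma fin1P (T : choiceType) (v : T -> k) : Defs.finsupp v <-> fin1 v.
Proof.
split.
  move=> /finite_seqP[s hs]; exists s => i hi.
  have : [set t | v t != 0]%classic i by [].
  by rewrite hs.
move=> [s hs]; apply: (sub_finite_set _ (finite_seq s)) => i /= /hs.
by [].
Qed.

End Infra.


Section D.
Variables (k : fieldType) (q : k).

Lemma DL n m (c1 c2 : B) : Delta_aux q n m c1 c2 != 0 ->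
  [/\ c1.1 = n, c2.1 = n + (c1.2)%:Z & (c1.2 + c2.2)%N = m].
Proof.
elim: m c1 c2 => [|m IH] [a1 b1] [a2 b2] /=.
  move=> h; have/andP[/eqP[-> ->] /eqP[-> ->]] : ((a1,b1) == (n,0%N)) && ((a2,b2) == (n,0%N)).
    by apply: contraR h => /negbTE ->.
  by rewrite addr0.
case: (ltnP 0 b1) => hb1; case: (ltnP 0 b2) => hb2 /=;
  rewrite ?addr0 ?add0r ?eqxx //.
- move=> h; have [h1|h2] : (q ^+ b2 * Delta_aux q n m (a1, b1.-1) (a2 - 1, b2) != 0) \/
     (Delta_aux q n m (a1, b1) (a2, b2.-1) != 0).
    by apply/orP; apply: contraR h; rewrite negb_or !negbK => /andP[/eqP -> /eqP ->]; rewrite addr0.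
  + move: h1; rewrite mulf_eq0 negb_or => /andP[_ /IH[/= -> h2 h3]].
    split=> //; last by rewrite -h3 -addSn prednK.
    by move/eqP: h2; rewrite subr_eq => /eqP ->; rewrite -addrA; congr (_ + _); rewrite -[in RHS](prednK hb1) -addn1 PoszD.
  + move/IH: h2 => [/= -> h2 h3]; split=> //; by rewrite -h3 -addnS prednK.
- move: hb2; rewrite leqn0 => /eqP ->.
  rewrite mulf_eq0 negb_or => /andP[_ /IH[/= -> h2 h3]].
  split=> //; last by rewrite -h3 -addSn prednK.
  by move/eqP: h2; rewrite subr_eq => /eqP ->; rewrite -addrA; congr (_ + _); rewrite -[in RHS](prednK hb1) -addn1 PoszD.
- move: hb1; rewrite leqn0 => /eqP -> /IH[/= -> h2 h3]; split=> //; by rewrite -h3 -addnS prednK.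
Qed.

Lemma DE n m : Delta_aux q n m (n, 0%N) (n, m) = 1.
Proof.
elim: m => [|m IH] /=; first by rewrite eqxx.
by rewrite add0r IH.
Qed.

Lemma DS n m c1 c2 : Delta_aux q n m.+1 c1 c2 =
      (if (0 < c1.2)%N
       then q ^+ c2.2 * Delta_aux q n m (c1.1, c1.2.-1) (c2.1 - 1, c2.2)
       else 0)
    + (if (0 < c2.2)%N then Delta_aux q n m c1 (c2.1, c2.2.-1) else 0).
Proof. by []. Qed.

Local Arguments Delta_aux : simpl never.

Lemma DD n m : Delta_aux q n m.+1 (n, 1%N) (n + 1, m) = \sum_(i < m.+1) q ^+ i.
Proof.
elim: m => [|m IH].
  by rewrite DS /= addrK addr0 /Delta_aux !eqxx big_ord1 expr0 mulr1.
rewrite DS /= addrK DE mulr1 IH.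
by rewrite [RHS]big_ord_recr /= addrC.
Qed.

Lemma Dshift r n m (c1 c2 : B) :
  Delta_aux q (n + r) m c1 c2 = Delta_aux q n m (c1.1 - r, c1.2) (c2.1 - r, c2.2).
Proof.
elim: m c1 c2 => [|m IH] [a1 b1] [a2 b2].
  by rewrite /Delta_aux /= !xpair_eqE !subr_eq.
by rewrite !DS IH /= IH /= addrAC.
Qed.

End D.


Section Lin.
Variables (k : fieldType) (q : k).

Definition tapp (M W : B -> B -> k) (c1 c2 : B) : k :=
  \sum_(a1 \in [set: B]) \sum_(a2 \in [set: B]) W a1 a2 * M a1 c1 * M a2 c2.

Definition d1 (b : B) : seq B := [seq (b.1, i) | i <- iota 0 b.2.+1].
Definition d2 (b : B) : seq B := [seq (b.1 + i%:Z, (b.2 - i)%N) | i <- iota 0 b.2.+1].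

Lemma Dsupp b c1 c2 : Delta_e q b c1 c2 != 0 -> c1 \in d1 b /\ c2 \in d2 b.
Proof.
case: c1 c2 => [x1 y1] [x2 y2]; rewrite /Delta_e => /DL[/= h1 h2 h3].
have hy : (y1 < b.2.+1)%N by rewrite -h3 ltnS leq_addr.
split; apply/mapP; exists y1; rewrite ?mem_iota ?add0n //.
- by rewrite h1.
- by rewrite h2 -h3 addKn.
Qed.

Lemma tadE M b c1 c2 : tensor_app_Delta q M b c1 c2 = tapp M (Delta_e q b) c1 c2.
Proof.
rewrite /tensor_app_Delta /tapp (@pairsum _ _ _ _ (d1 b) (d2 b)) // => a p.
by rewrite -mulrA mulf_eq0 negb_or => /andP[/Dsupp].
Qed.

Lemma app_e M b : app M (ebasis k b) = M b.
Proof.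
apply: funext => c; rewrite /app (@sum_pt _ _ b) /ebasis ?eqxx ?mul1r //.
by move=> a; rewrite eq_sym => /negbTE ->; rewrite mul0r.
Qed.

Lemma Delta_e1 b c1 c2 : Delta q (ebasis k b) c1 c2 = Delta_e q b c1 c2.
Proof.
rewrite /Delta (@sum_pt _ _ b) /ebasis ?eqxx ?mul1r //.
by move=> a; rewrite eq_sym => /negbTE ->; rewrite mul0r.
Qed.

Lemma eps_e1 b : eps (ebasis k b) = eps_e k b.
Proof.
rewrite /eps (@sum_pt _ _ b) /ebasis ?eqxx ?mul1r //.
by move=> a; rewrite eq_sym => /negbTE ->; rewrite mul0r.
Qed.

Lemma tapp_id W c1 c2 : tapp (idm k) W c1 c2 = W c1 c2.
Proof.
rewrite /tapp (@sum_pt _ _ c1).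
  rewrite (@sum_pt _ _ c2) /idm /ebasis ?eqxx ?mulr1 //.
  by move=> a /negbTE ->; rewrite mulr0.
move=> a ha; apply: fsbig1 => a2 _.
by rewrite /idm /ebasis (negbTE ha) mulr0 mul0r.
Qed.

Lemma app_id v : app (idm k) v = v.
Proof.
apply: funext => c; rewrite /app (@sum_pt _ _ c) /idm /ebasis ?eqxx ?mulr1 //.
by move=> a /negbTE ->; rewrite mulr0.
Qed.

Definition endo1 (M : B -> B -> k) := exists f : B -> seq B, forall b c, M b c != 0 -> c \in f b.
Definition fin2 (W : B -> B -> k) := exists s1 s2 : seq B,
  forall a1 a2, W a1 a2 != 0 -> a1 \in s1 /\ a2 \in s2.

Lemma endo1P M : is_endo M -> endo1 M.
Proof.
move=> h; have /choice[f hf] : forall b, exists s : seq B, forall c, M b c != 0 -> c \in s.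
  by move=> b; have /fin1P[s hs] := h b; exists s.
by exists f.
Qed.

Lemma endo1P' M : endo1 M -> is_endo M.
Proof. by move=> [f hf] b; apply/fin1P; exists (f b) => c /hf. Qed.

Lemma fin_app M v : endo1 M -> fin1 v -> fin1 (app M v).
Proof.
move=> [f hf] [s hs]; exists (flatten [seq f b | b <- s]) => c /sum0_ex[b].
rewrite mulf_eq0 negb_or => /andP[/hs h1 /hf h2].
by apply/flatten_mapP; exists b.
Qed.

Lemma fin_Delta v : fin1 v -> fin2 (Delta q v).
Proof.
move=> [s hs]; exists (flatten [seq d1 b | b <- s]), (flatten [seq d2 b | b <- s]).
move=> a1 a2 /sum0_ex[b]; rewrite mulf_eq0 negb_or => /andP[/hs h1 /Dsupp[h2 h3]].
by split; apply/flatten_mapP; exists b.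
Qed.

End Lin.


Section Sw.
Variable k : fieldType.

Lemma swap3 (T : choiceType) (G : T -> T -> T -> k) (s s1 s2 : seq T) :
  (forall b a1 a2, G b a1 a2 != 0 -> [/\ b \in s, a1 \in s1 & a2 \in s2]) ->
  \sum_(a1 \in [set: T]) \sum_(a2 \in [set: T]) \sum_(b \in [set: T]) G b a1 a2 =
  \sum_(b \in [set: T]) \sum_(a1 \in [set: T]) \sum_(a2 \in [set: T]) G b a1 a2.
Proof.
move=> h.
have e1 a1 : \sum_(a2 \in [set: T]) \sum_(b \in [set: T]) G b a1 a2 =
             \sum_(b \in [set: T]) \sum_(a2 \in [set: T]) G b a1 a2.
  by apply: (@xchg _ _ _ _ s s2) => b a2 /h[].
under eq_fsbigr => a1 _ do rewrite e1.
apply: (@xchg _ _ _ (fun b a1 => \sum_(a2 \in [set: T]) G b a1 a2) s s1).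
by move=> b a1 /sum0_ex[a2 /h[]].
Qed.

Lemma swap4 (T : choiceType) (G : T -> T -> T -> T -> k) (s1 s2 u1 u2 : seq T) :
  (forall a1 a2 p1 p2, G a1 a2 p1 p2 != 0 ->
     [/\ a1 \in s1, a2 \in s2, p1 \in u1 & p2 \in u2]) ->
  \sum_(p1 \in [set: T]) \sum_(p2 \in [set: T]) \sum_(a1 \in [set: T])
     \sum_(a2 \in [set: T]) G a1 a2 p1 p2 =
  \sum_(a1 \in [set: T]) \sum_(a2 \in [set: T]) \sum_(p1 \in [set: T])
     \sum_(p2 \in [set: T]) G a1 a2 p1 p2.
Proof.
move=> h.
have e1 p1 : \sum_(p2 \in [set: T]) \sum_(a1 \in [set: T])
     \sum_(a2 \in [set: T]) G a1 a2 p1 p2 = \sum_(a1 \in [set: T])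
     \sum_(p2 \in [set: T]) \sum_(a2 \in [set: T]) G a1 a2 p1 p2.
  apply: (@xchg _ _ _ (fun a1 p2 => \sum_(a2 \in [set: T]) G a1 a2 p1 p2) s1 u2).
  by move=> a1 p2 /sum0_ex[a2 /h[]].
under eq_fsbigr => p1 _ do rewrite e1.
rewrite (@xchg _ _ _ (fun a1 p1 => \sum_(p2 \in [set: T])
   \sum_(a2 \in [set: T]) G a1 a2 p1 p2) s1 u1); last first.
  by move=> a1 p1 /sum0_ex[p2 /sum0_ex[a2 /h[]]].
apply: eq_fsbigr => a1 _.
have e3 p1 : \sum_(p2 \in [set: T]) \sum_(a2 \in [set: T]) G a1 a2 p1 p2 =
             \sum_(a2 \in [set: T]) \sum_(p2 \in [set: T]) G a1 a2 p1 p2.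
  by apply: (@xchg _ _ _ (fun a2 p2 => G a1 a2 p1 p2) s2 u2) => a2 p2 /h[].
under eq_fsbigr => p1 _ do rewrite e3.
apply: (@xchg _ _ _ (fun a2 p1 => \sum_(p2 \in [set: T]) G a1 a2 p1 p2) s2 u1).
by move=> a2 p1 /sum0_ex[p2 /h[]].
Qed.

End Sw.


Section L2.
Variables (k : fieldType) (q : k).

Lemma app_assoc (M N : B -> B -> k) v c : endo1 N -> fin1 v ->
  app M (app N v) c = app (lcomp M N) v c.
Proof.
move=> [f hf] [s hs]; rewrite /app /lcomp.
transitivity (\sum_(b \in [set: B]) \sum_(a \in [set: B]) v a * N a b * M b c).
  by apply: eq_fsbigr => b _; rewrite mulr_fsuml.
rewrite (@xchg _ _ _ _ s (flatten [seq f b | b <- s])); last first.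
  move=> a b; rewrite !mulf_eq0 !negb_or => /andP[/andP[/hs h1 /hf h2] _].
  by split=> //; apply/flatten_mapP; exists a.
apply: eq_fsbigr => a _; rewrite /app mulr_fsumr.
by apply: eq_fsbigr => b _; rewrite mulrA.
Qed.

Lemma eps_app (M : B -> B -> k) v : endo1 M -> fin1 v ->
  (forall b, eps (M b) = eps_e k b) -> eps (app M v) = eps v.
Proof.
move=> [f hf] [s hs] he; rewrite /eps /app.
transitivity (\sum_(a \in [set: B]) \sum_(b \in [set: B]) v b * M b a * eps_e k a).
  by apply: eq_fsbigr => b _; rewrite mulr_fsuml.
rewrite (@xchg _ _ _ _ s (flatten [seq f b | b <- s])); last first.
  move=> a b; rewrite !mulf_eq0 !negb_or => /andP[/andP[/hs h1 /hf h2] _].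
  by split=> //; apply/flatten_mapP; exists a.
apply: eq_fsbigr => b _; rewrite -he /eps mulr_fsumr.
by apply: eq_fsbigr => a _; rewrite mulrA.
Qed.

Lemma Delta_app (M : B -> B -> k) v c1 c2 : endo1 M -> fin1 v ->
  (forall b c1 c2, Delta q (M b) c1 c2 = tapp M (Delta_e q b) c1 c2) ->
  Delta q (app M v) c1 c2 = tapp M (Delta q v) c1 c2.
Proof.
move=> [f hf] [s hs] hD; rewrite /Delta /app.
transitivity (\sum_(a \in [set: B]) \sum_(b \in [set: B]) v b * (M b a * Delta_e q a c1 c2)).
  by apply: eq_fsbigr => b _; rewrite mulr_fsuml; apply: eq_fsbigr => a _; rewrite mulrA.
rewrite (@xchg _ _ _ _ s (flatten [seq f b | b <- s])); last first.
  move=> a b; rewrite !mulf_eq0 !negb_or => /andP[/hs h1 /andP[/hf h2 _]].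
  by split=> //; apply/flatten_mapP; exists a.
transitivity (\sum_(b \in [set: B]) \sum_(a1 \in [set: B]) \sum_(a2 \in [set: B])
   v b * (Delta_e q b a1 a2 * M a1 c1 * M a2 c2)).
  apply: eq_fsbigr => b _; rewrite -mulr_fsumr.
  have := hD b c1 c2; rewrite /Delta => ->; rewrite /tapp mulr_fsumr.
  by apply: eq_fsbigr => a1 _; rewrite mulr_fsumr.
rewrite /tapp -(@swap3 _ _ _ s (flatten [seq d1 b | b <- s]) (flatten [seq d2 b | b <- s])).
  apply: eq_fsbigr => a1 _; apply: eq_fsbigr => a2 _.
  rewrite mulr_fsuml mulr_fsuml; apply: eq_fsbigr => b _; ring.
move=> b a1 a2; rewrite !mulf_eq0 !negb_or => /andP[/hs h1 /andP[/andP[/Dsupp[h2 h3] _] _]].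
by split=> //; apply/flatten_mapP; exists b.
Qed.

Lemma tapp_comp (M N W : B -> B -> k) c1 c2 : endo1 N -> fin2 W ->
  tapp M (tapp N W) c1 c2 = tapp (lcomp M N) W c1 c2.
Proof.
move=> [f hf] [s1 [s2 hs]]; rewrite /tapp /lcomp /app.
transitivity (\sum_(p1 \in [set: B]) \sum_(p2 \in [set: B]) \sum_(a1 \in [set: B])
     \sum_(a2 \in [set: B]) (W a1 a2 * N a1 p1 * N a2 p2 * M p1 c1 * M p2 c2)).
  apply: eq_fsbigr => p1 _; apply: eq_fsbigr => p2 _.
  rewrite mulr_fsuml mulr_fsuml; apply: eq_fsbigr => a1 _.
  rewrite mulr_fsuml mulr_fsuml; apply: eq_fsbigr => a2 _; ring.
rewrite (@swap4 _ _ _ s1 s2 (flatten [seq f b | b <- s1]) (flatten [seq f b | b <- s2])).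
  apply: eq_fsbigr => a1 _; apply: eq_fsbigr => a2 _.
  rewrite -mulrA mulr_fsuml (mulr_fsumr (W a1 a2)); apply: eq_fsbigr => p1 _.
  rewrite mulrA mulr_fsumr; apply: eq_fsbigr => p2 _; ring.
move=> a1 a2 p1 p2; rewrite !mulf_eq0 !negb_or.
move=> /andP[/andP[/andP[/andP[/hs[h1 h2] /hf h3] /hf h4] _] _].
by split=> //; apply/flatten_mapP; [exists a1|exists a2].
Qed.

End L2.


Section L3.
Variables (k : fieldType) (q : k).

Lemma endo_fin (M : B -> B -> k) b : endo1 M -> fin1 (M b).
Proof. by move=> [f hf]; exists (f b) => c /hf. Qed.

Lemma coalg_unpack (M : B -> B -> k) : is_coalg_map q M ->
  [/\ endo1 M, (forall b c1 c2, Delta q (M b) c1 c2 = tapp M (Delta_e q b) c1 c2)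
    & (forall b, eps (M b) = eps_e k b)].
Proof.
by move=> [he [hD hE]]; split => //; [exact: endo1P | move=> b c1 c2; rewrite hD tadE].
Qed.

Lemma fin2_De b : fin2 (Delta_e q b).
Proof. by exists (d1 b), (d2 b) => a1 a2 /Dsupp. Qed.

Lemma endo_comp (M N : B -> B -> k) : is_endo M -> is_endo N -> is_endo (lcomp M N).
Proof.
move=> /endo1P hM /endo1P hN b; apply/fin1P; apply: fin_app => //.
exact: endo_fin.
Qed.

Lemma coalg_comp (M N : B -> B -> k) : is_coalg_map q M -> is_coalg_map q N ->
  is_coalg_map q (lcomp M N).
Proof.
move=> cM cN; have [eM dM pM] := coalg_unpack cM; have [eN dN pN] := coalg_unpack cN.
split; first by apply: endo_comp; [case: cM|case: cN].
split=> [b c1 c2|b]; last by rewrite /lcomp eps_app ?pN //; apply: endo_fin.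
rewrite tadE /lcomp Delta_app //; last exact: endo_fin.
have -> : Delta q (N b) = tapp N (Delta_e q b).
  by apply: funext => x; apply: funext => y; rewrite dN.
by rewrite tapp_comp //; apply: fin2_De.
Qed.

Lemma coalg_inv (M N : B -> B -> k) : is_coalg_map q M -> is_endo N ->
  lcomp M N = idm k -> lcomp N M = idm k -> is_coalg_map q N.
Proof.
move=> cM /endo1P eN hMN hNM; have [eM dM pM] := coalg_unpack cM.
split; first exact: endo1P'.
have hb b : app M (N b) = ebasis k b by move: hMN => /(congr1 (fun F => F b)).
split=> [b c1 c2|b]; last by rewrite -(eps_app (M:=M)) // ?hb ?eps_e1 //; apply: endo_fin.
rewrite tadE -tapp_id -hNM -tapp_comp; last first.
- by apply: fin_Delta; apply: endo_fin.
- exact: eM.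
have -> : tapp M (Delta q (N b)) = Delta q (app M (N b)).
  by apply: funext => x; apply: funext => y; rewrite Delta_app //; apply: endo_fin.
rewrite hb.
have -> : Delta q (ebasis k b) = Delta_e q b.
  by apply: funext => x; apply: funext => y; exact: Delta_e1.
by [].
Qed.

Lemma lcomp_assoc (A B' C : B -> B -> k) : is_endo B' -> is_endo C ->
  lcomp A (lcomp B' C) = lcomp (lcomp A B') C.
Proof.
move=> /endo1P hB /endo1P hC; apply: funext => b; apply: funext => c.
by rewrite /lcomp app_assoc //; apply: endo_fin.
Qed.

Lemma lcomp_idl (M : B -> B -> k) : lcomp (idm k) M = M.
Proof. by apply: funext => b; rewrite /lcomp app_id. Qed.

Lemma lcomp_idr (M : B -> B -> k) : lcomp M (idm k) = M.
Proof. by apply: funext => b; rewrite /lcomp /idm app_e. Qed.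

Lemma endo_id : is_endo (idm k).
Proof.
move=> b; apply/fin1P; exists [:: b] => c; rewrite /idm /ebasis.
by apply: contraR; rewrite inE eq_sym => /negbTE ->; rewrite eqxx.
Qed.

Lemma coalg_id : is_coalg_map q (idm k).
Proof.
split; first exact: endo_id.
split=> [b c1 c2|b]; last exact: eps_e1.
by rewrite tadE tapp_id Delta_e1.
Qed.

Lemma Autc_id : Autc q (idm k).
Proof.
split; first exact: coalg_id.
by exists (idm k); rewrite lcomp_idl; split=> //; exact: endo_id.
Qed.

Lemma Autc_comp (M N : B -> B -> k) : Autc q M -> Autc q N -> Autc q (lcomp M N).
Proof.
move=> [cM [M' [eM' [h1 h2]]]] [cN [N' [eN' [h3 h4]]]].
have eM := cM.1; have eN := cN.1.
split; first exact: coalg_comp.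
exists (lcomp N' M'); split; first exact: endo_comp.
split.
  by rewrite lcomp_assoc ?endo_comp // -(lcomp_assoc M (B':=N) (C:=N')) // h3 lcomp_idr.
by rewrite lcomp_assoc ?endo_comp // -(lcomp_assoc N' (B':=M') (C:=M)) // h2 lcomp_idr.
Qed.

Lemma Autc_inv (M N : B -> B -> k) : Autc q M -> is_endo N ->
  lcomp M N = idm k -> lcomp N M = idm k -> Autc q N.
Proof.
move=> [cM _] eN h1 h2; split; first exact: (coalg_inv cM).
by exists M; split => //; case: cM.
Qed.

End L3.


Section G.
Variables (k : fieldType) (q : k).

Lemma grouplike (v : B -> k) :
  (forall c1 c2, Delta q v c1 c2 = v c1 * v c2) -> eps v = 1 ->
  exists j : int, v = ebasis k (j, 0%N).
Proof.
move=> hD he.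
have g1 b : (b.2 != 0)%N -> v b = 0.
  move=> hb; apply/eqP; rewrite -[v b == 0]orbb -mulf_eq0 -hD; apply/eqP; apply: fsbig1 => a _.
  apply/eqP; rewrite mulf_eq0; apply/orP; right; apply: contraR hb.
  rewrite /Delta_e => /DL[h1 h2 _]; move: h2; rewrite h1 -{1}(addr0 a.1) => /addrI.
  by move=> [->].
have g2 i j : v (i, 0%N) * v (j, 0%N) = ((j, 0%N) == (i, 0%N))%:R * v (i, 0%N).
  rewrite -hD /Delta (@sum_pt _ _ (i, 0%N)); first by rewrite /Delta_e /= eqxx mulrC.
  move=> a ha; apply/eqP; rewrite mulf_eq0; apply/orP; right; apply: contraR ha.
  rewrite /Delta_e => /DL[/= h1 _ h3]; apply/eqP.
  by move: h3; case: a h1 => a1 a2 /= -> <-.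
have [a] : exists a, v a * eps_e k a != 0 by apply: sum0_ex; have := he; rewrite /eps => ->; exact: oner_neq0.
rewrite mulf_eq0 negb_or => /andP[va _].
have a2 : a.2 = 0%N by apply/eqP; apply: contraR va => /g1 ->.
case: a a2 va => j a2 /= -> va.
have vj : v (j, 0%N) = 1.
  have := g2 j j; rewrite eqxx mul1r => h.
  have /eqP : v (j, 0%N) * (v (j, 0%N) - 1) = 0 by rewrite mulrBr mulr1 h subrr.
  by rewrite mulf_eq0 (negbTE va) subr_eq0 => /eqP.
exists j; apply: funext => b; rewrite /ebasis.
case: (eqVneq (j, 0%N) b) => [<-|hb]; first by rewrite vj.
case: b hb => i m hb; case: (eqVneq m 0%N) => [hm|hm]; last by rewrite g1.
move: hb; rewrite hm => hb.
have := g2 i j; rewrite vj mulr1 (negbTE hb) mul0r.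
by [].
Qed.

End G.


Section St.
Variables (k : fieldType) (q : k).
Hypothesis hq : forall n : nat, (0 < n)%N -> q ^+ n != 1.

Local Arguments Delta_aux : simpl never.
Local Arguments Delta_e : simpl never.

Lemma DeltaPt (v : B -> k) c1 c2 :
  Delta q v c1 c2 = v (c1.1, (c1.2 + c2.2)%N) * Delta_e q (c1.1, (c1.2 + c2.2)%N) c1 c2.
Proof.
rewrite /Delta (@sum_pt _ _ (c1.1, (c1.2 + c2.2)%N)) // => a ha.
apply/eqP; rewrite mulf_eq0; apply/orP; right; apply: contraR ha.
rewrite /Delta_e => /DL[h1 _ h3]; apply/eqP.
by case: a h1 h3 => a1 a2 /= -> <-.
Qed.

Lemma qsum_neq0 m : \sum_(i < m.+1) q ^+ i != 0.
Proof.
apply: contraT; rewrite negbK => /eqP h.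
have := hq (ltn0Sn m); rewrite -subr_eq0 subrX1 h mulr0 eqxx.
by [].
Qed.

Lemma eb_ne (a b : B) : a != b -> ebasis k a b = 0.
Proof. by rewrite /ebasis => /negbTE ->. Qed.

Lemma step (M N : B -> B -> k) n t t' : is_coalg_map q M -> lcomp N M = idm k ->
  M (n, 0%N) = ebasis k (t, 0%N) -> M (n + 1, 0%N) = ebasis k (t', 0%N) -> t' = t + 1.
Proof.
move=> cM hNM h0 h1; apply/eqP; apply: contraT => hne.
set w := M (n, 1%N).
have hDw c1 c2 : Delta q w c1 c2 = w c1 * ebasis k (t', 0%N) c2 + ebasis k (t, 0%N) c1 * w c2.
  case: cM => _ [hD _]; rewrite /w hD /tensor_app_Delta.
  rewrite (@sum_pt2 _ _ ((n, 1%N), (n + 1, 0%N)) ((n, 0%N), (n, 1%N))).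
  - have e1 : Delta_e q (n, 1%N) (n, 1%N) (n + 1, 0%N) = 1.
      by rewrite /Delta_e (DD q n 0) big_ord1.
    have e2 : Delta_e q (n, 1%N) (n, 0%N) (n, 1%N) = 1 by rewrite /Delta_e DE.
    by rewrite /= e1 e2 !mul1r h0 h1.
  - by rewrite xpair_eqE [(n, 1%N) == _]xpair_eqE andbF.
  move=> [[a1 b1] [a2 b2]] ha hb; apply/eqP; rewrite !mulf_eq0; apply/orP; left.
  apply/orP; left; apply: contraR ha; rewrite /Delta_e => /DL[/= e1 e2 e3].
  move: hb; rewrite e1 e2; clear e1 e2; case: b1 e3 => [|[|b1]] //=.
    move=> e3; have -> : b2 = 1%N by lia.
    by rewrite addr0 eqxx.
  move=> e3; have -> : b2 = 0%N by lia.
  by rewrite eqxx.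
have P1 j m : w (j, m.+2) = 0.
  have := hDw (j, 1%N) (j + 1, m.+1); rewrite DeltaPt /= /Delta_e DD.
  rewrite !eb_ne ?xpair_eqE ?andbF // mulr0 mul0r addr0 => /eqP.
  by rewrite mulf_eq0 (negbTE (qsum_neq0 _)) orbF => /eqP.
have P2 j : w (j, 1%N) = w (j, 1%N) * ebasis k (t', 0%N) (j + 1, 0%N).
  have := hDw (j, 1%N) (j + 1, 0%N); rewrite DeltaPt /= /Delta_e (DD q j 0) big_ord1.
  by rewrite mulr1 (@eb_ne (t, 0%N)) ?xpair_eqE ?andbF // mul0r addr0.
have P3 j : w (j, 1%N) = ebasis k (t, 0%N) (j, 0%N) * w (j, 1%N).
  have := hDw (j, 0%N) (j, 1%N); rewrite DeltaPt /= /Delta_e DE mulr1.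
  by rewrite (@eb_ne (t', 0%N)) ?xpair_eqE ?andbF // mulr0 add0r.
have P4 j : w (j, 0%N) = w (j, 0%N) * ebasis k (t', 0%N) (j, 0%N) +
                         ebasis k (t, 0%N) (j, 0%N) * w (j, 0%N).
  have := hDw (j, 0%N) (j, 0%N); rewrite DeltaPt /= /Delta_e.
  by rewrite /Delta_aux /= !eqxx mulr1.
have wz b : b != (t, 0%N) -> b != (t', 0%N) -> w b = 0.
  case: b => j [|[|m]] bt bt'; last exact: P1.
  - by rewrite P4 !eb_ne 1?eq_sym // mulr0 mul0r addr0.
  - apply/eqP; apply: contraT => wn.
    have /eqP := P2 j; rewrite -subr_eq0 -{1}(mulr1 (w _)) -mulrBr mulf_eq0 (negbTE wn) /=.
    rewrite subr_eq0 /ebasis; case: ((t', 0%N) =P (j + 1, 0%N)) => [[ht'] _|_]; last by rewrite -[false%:R]/(0%:R) mulr0n oner_eq0.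
    have /eqP := P3 j; rewrite -subr_eq0 -{1}(mul1r (w _)) -mulrBl mulf_eq0 (negbTE wn) orbF.
    rewrite subr_eq0 /ebasis; case: ((t, 0%N) =P (j, 0%N)) => [[ht] _|_]; last by rewrite -[false%:R]/(0%:R) mulr0n oner_eq0.
    by move: hne; rewrite ht' ht eqxx.
have hNM1 b : app N (M b) = ebasis k b by move: hNM => /(congr1 (fun F => F b)).
have Nt : N (t, 0%N) = ebasis k (n, 0%N) by rewrite -app_e -h0 hNM1.
have Nt' : N (t', 0%N) = ebasis k (n + 1, 0%N) by rewrite -app_e -h1 hNM1.
have h : app N w (n, 1%N) = 1 by rewrite /w hNM1 /ebasis eqxx.
have h' : app N w (n, 1%N) = 0.
  rewrite /app; apply: fsbig1 => b _.
  case: (eqVneq b (t, 0%N)) => [->|bt]; first by rewrite Nt eb_ne ?mulr0 // xpair_eqE andbF.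
  case: (eqVneq b (t', 0%N)) => [->|bt']; first by rewrite Nt' eb_ne ?mulr0 // xpair_eqE andbF.
  by rewrite wz // mul0r.
by move: h; rewrite h' => /eqP; rewrite eq_sym oner_eq0.
Qed.

End St.


Section Tr.
Variables (k : fieldType) (q : k).
Hypothesis hq : forall n : nat, (0 < n)%N -> q ^+ n != 1.

Lemma eb_inj (a b : B) : ebasis k a = ebasis k b -> a = b.
Proof.
move=> /(congr1 (fun f => f a)); rewrite /ebasis eqxx.
case: (b =P a) => [-> //|_] /eqP.
by rewrite -[false%:R]/(0%:R) -[true%:R]/(1%:R) mulr0n mulr1n oner_eq0.
Qed.

Lemma gl_M (M : B -> B -> k) n : is_coalg_map q M -> exists j, M (n, 0%N) = ebasis k (j, 0%N).
Proof.
move=> [_ [hD hE]]; apply: (grouplike (q := q)); last by rewrite hE.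
move=> c1 c2; rewrite hD /tensor_app_Delta (@sum_pt _ _ ((n, 0%N), (n, 0%N))).
  by rewrite /Delta_e /= eqxx mul1r.
move=> [a1 a2] ha; rewrite /Delta_e /=.
case: (eqVneq a1 (n, 0%N)) => [e1|]; last by move=> _; rewrite mul0r !mul0r.
case: (eqVneq a2 (n, 0%N)) => [e2|]; last by move=> _; rewrite mul0r !mul0r.
by move: ha; rewrite e1 e2 eqxx.
Qed.

Lemma trans (M : B -> B -> k) : Autc q M ->
  exists s : int, forall n, M (n, 0%N) = ebasis k (n + s, 0%N).
Proof.
move=> [cM [N [eN [hMN hNM]]]].
have [s hs] := gl_M 0 cM; exists s.
have H m : M (m%:Z, 0%N) = ebasis k (m%:Z + s, 0%N) /\
           M (- m%:Z, 0%N) = ebasis k (- m%:Z + s, 0%N).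
  elim: m => [|m [IH1 IH2]]; first by rewrite oppr0 add0r.
  split.
    have [j hj] := gl_M (m.+1)%:Z cM.
    have e : (m.+1)%:Z = m%:Z + 1 by lia.
    have := step hq cM hNM IH1; rewrite -e => /(_ _ hj) ej.
    by rewrite hj ej; congr (ebasis k (_, _)); lia.
  have [j hj] := gl_M (- (m.+1)%:Z) cM.
  have e : - m%:Z = - (m.+1)%:Z + 1 by lia.
  have := step hq cM hNM hj; rewrite -e => /(_ _ IH2) e2.
  by rewrite hj; congr (ebasis k (_, _)); lia.
by case=> m; [case: (H m) | rewrite NegzE; case: (H m.+1)].
Qed.

Lemma theta_endo r : is_endo (theta k r).
Proof.
move=> b; apply/fin1P; exists [:: (b.1 + r, b.2)] => c; rewrite /theta /ebasis.
by apply: contraR; rewrite inE eq_sym => /negbTE ->; rewrite eqxx.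
Qed.

Lemma theta_ne r a (c : B) : a != (c.1 - r, c.2) -> ebasis k (a.1 + r, a.2) c = 0.
Proof.
move=> h; apply: eb_ne; apply: contra h; case: a c => a1 a2 [c1 c2] /=.
by rewrite !xpair_eqE => /andP[/eqP <- ->]; rewrite addrK eqxx.
Qed.

Lemma theta_coalg r : is_coalg_map q (theta k r).
Proof.
split; first exact: theta_endo.
split=> [b c1 c2|b]; last by rewrite /theta eps_e1.
rewrite tadE /theta Delta_e1 /Delta_e (Dshift q r) /tapp.
rewrite (@sum_pt _ _ (c1.1 - r, c1.2)); last first.
  by move=> a ha; apply: fsbig1 => a2 _; rewrite (theta_ne ha) mulr0 mul0r.
rewrite (@sum_pt _ _ (c2.1 - r, c2.2)); last by move=> a ha; rewrite (theta_ne ha) mulr0.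
rewrite /= !subrK /ebasis.
by case: c1 c2 => [x1 y1] [x2 y2]; rewrite !eqxx !mulr1.
Qed.

Lemma theta_comp r s : lcomp (theta k r) (theta k s) = theta k (r + s).
Proof.
apply: funext => b; rewrite /lcomp {2}/theta app_e /theta /=.
by congr (ebasis k (_, _)); rewrite -addrA (addrC s).
Qed.

Lemma theta0 : theta k 0 = idm k.
Proof. by apply: funext => -[b1 b2]; rewrite /theta /idm /= addr0. Qed.

Lemma theta_Autc r : Autc q (theta k r).
Proof.
split; first exact: theta_coalg.
exists (theta k (- r)); split; first exact: theta_endo.
by rewrite !theta_comp subrr addNr theta0.
Qed.

End Tr.

Unset Implicit Arguments.

Theorem proposition2p4 (k : fieldType) (q : k)
  (hq0 : q != 0) (hq : forall n : nat, (0 < n)%N -> q ^+ n != 1) :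
  (* Aut_0(H) is a subgroup of Aut_c(H) *)
  (forall M, Aut0 q M -> Autc q M) /\
  Aut0 q (idm k) /\
  (forall M N, Aut0 q M -> Aut0 q N -> Aut0 q (lcomp M N)) /\
  (forall M N, Aut0 q M -> is_endo N -> lcomp M N = idm k -> lcomp N M = idm k ->
     Aut0 q N) /\
  (* ... which is normal in Aut_c(H) *)
  (forall P M Pinv, Autc q P -> Aut0 q M -> is_endo Pinv ->
     lcomp P Pinv = idm k -> lcomp Pinv P = idm k ->
     Aut0 q (lcomp (lcomp P M) Pinv)) /\
  (* Theta = { theta_r : r in Z } is a subgroup of Aut_c(H) *)
  (forall r : int, Autc q (theta k r)) /\
  theta k 0 = idm k /\
  (forall r s : int, lcomp (theta k r) (theta k s) = theta k (r + s)) /\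
  (* Aut_0(H) /\ Theta = {id} *)
  (forall M, Aut0 q M -> (exists r : int, M = theta k r) -> M = idm k) /\
  (* Aut_c(H) = Aut_0(H) Theta *)
  (forall M, Autc q M ->
     exists N (r : int), Aut0 q N /\ M = lcomp N (theta k r)).
Proof.
have hb M N b : lcomp M N = idm k -> app M (N b) = ebasis k b.
  by move=> /(congr1 (fun F => F b)).
split; first by move=> M [].
split; first by split; [exact: Autc_id|].
split.
  move=> M N [aM hM] [aN hN]; split; first exact: Autc_comp.
  by rewrite /lcomp hN app_e hM.
split.
  move=> M N [aM hM] eN h1 h2; split; first exact: (Autc_inv aM eN h1 h2).
  by have := hb _ _ (0%Z, 0%N) h2; rewrite hM app_e.
split.
  move=> P M Pinv aP [aM hM] eP h1 h2.
  have aPi := Autc_inv aP eP h1 h2.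
  split; first by apply: Autc_comp => //; exact: Autc_comp.
  have [u hu] := trans hq aPi; have [s hs] := trans hq aM.
  have s0 : s = 0.
    by have := hs 0; rewrite hM add0r => /eb_inj [].
  have := hb _ _ (0%Z, 0%N) h1; rewrite hu add0r app_e => hPu.
  by rewrite /lcomp hu add0r app_e /lcomp hs s0 addr0 app_e.
split; first exact: theta_Autc.
split; first exact: theta0.
split; first exact: theta_comp.
split.
  move=> M [_ hM] [r hr]; rewrite hr; move: hM; rewrite hr /theta /= add0r.
  by move=> /eb_inj [->]; exact: theta0.
move=> M aM; have [s hs] := trans hq aM.
exists (lcomp M (theta k (- s))), s; split.
  split; first by apply: Autc_comp => //; exact: theta_Autc.
  by rewrite /lcomp /theta /= add0r app_e hs addNr.
rewrite -(lcomp_assoc M (B' := theta k (-s)) (C := theta k s)); [by rewrite (@theta_comp k) addNr (@theta0 k) lcomp_idr|exact: theta_endo|exact: theta_endo].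
Qed.
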